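(* Let $K\ge1$ and let $A_K,B_K,N_K$ be as defined in the context. Let $T_K=\{s\in S(\theta): \max N_K\le s<\max N_{K+1}\}$ and $T'_K=\{A_K+B_K\theta-s : s\in T_K\}$. Then $T'_K\subseteq S(\theta)$, and the set $C_K=T'_K\cup N_K\cup T_K$ is a block of consecutive terms of $S_\theta$ (i.e. $C_K=S(\theta)\cap[\min C_K,\max C_K]$) which is invariant under $s\mapsto A_K+B_K\theta-s$. In particular the sequence of consecutive differences of the elements of $C_K$ in increasing order is a palindrome.
   Context: Fix an irrational $\theta$ with $1<\theta<2$. Let $S(\theta)=\{i+j\theta : i,j\in\mathbb{N}_0\}$, and let $S_\theta$ be the sequence of its elements in increasing order. Every positive integer $K$ is either $K=\lfloor k\theta\rfloor+k$ or $K=\lfloor k/\theta\rfloor+k$ for a unique integer $k\ge1$ (and not both). In the first case set $(A_K,B_K)=(\lfloor k\theta\rfloor,k)$; in the second case set $(A_K,B_K)=(k,\lfloor k/\theta\rfloor)$. Define $N_K=\{s\in S(\theta): \min(A_K,B_K\theta)\le s\le \max(A_K,B_K\theta)\}$. *)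

(* Defs.v *)
From Stdlib Require Import Reals Lra Lia ZArith List Sorting.Sorted.
Import ListNotations.
Open Scope R_scope.

Definition irrational (x : R) : Prop :=
  forall p q : Z, (q <> 0)%Z -> x <> IZR p / IZR q.

(* floor: up x is the unique integer z with x < z <= x + 1 *)
Definition flr (x : R) : Z := (up x - 1)%Z.

Definition inS (theta s : R) : Prop :=
  exists i j : nat, s = INR i + INR j * theta.

Definition AB_spec (theta : R) (K a b : nat) : Prop :=
  (exists k : nat, (1 <= k)%nat /\
     Z.of_nat K = (flr (INR k * theta) + Z.of_nat k)%Z /\
     Z.of_nat a = flr (INR k * theta) /\ b = k)
  \/
  (exists k : nat, (1 <= k)%nat /\
     Z.of_nat K = (flr (INR k / theta) + Z.of_nat k)%Z /\
     a = k /\ Z.of_nat b = flr (INR k / theta)).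

Definition Nset (theta : R) (a b : nat) (s : R) : Prop :=
  inS theta s /\ Rmin (INR a) (INR b * theta) <= s <= Rmax (INR a) (INR b * theta).

(* max N_K ; both endpoints A_K and B_K theta lie in N_K, so this is its maximum *)
Definition maxN (theta : R) (a b : nat) : R := Rmax (INR a) (INR b * theta).

(* T_K, given (a,b) = (A_K,B_K) and (a',b') = (A_{K+1},B_{K+1}) *)
Definition Tset (theta : R) (a b a' b' : nat) (s : R) : Prop :=
  inS theta s /\ maxN theta a b <= s < maxN theta a' b'.

Definition refl (theta : R) (a b : nat) (s : R) : R := INR a + INR b * theta - s.

Definition Tpset (theta : R) (a b a' b' : nat) (s : R) : Prop :=
  exists t, Tset theta a b a' b' t /\ s = refl theta a b t.

Definition Cset (theta : R) (a b a' b' : nat) (s : R) : Prop :=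
  Tpset theta a b a' b' s \/ Nset theta a b s \/ Tset theta a b a' b' s.

Fixpoint diffs (l : list R) : list R :=
  match l with
  | x :: ((y :: _) as t) => (y - x) :: diffs t
  | _ => []
  end.

(* Main.v *)
Require Import Defs.
From Stdlib Require Import Reals Lra Lia ZArith List Sorting.Sorted Classical.
Import ListNotations.
Open Scope R_scope.

Lemma flr_spec x : IZR (flr x) <= x < IZR (flr x) + 1.
Proof. unfold flr. destruct (archimed x) as [H1 H2]. rewrite minus_IZR. simpl. lra. Qed.

Lemma valid th K a b : 0 < th -> AB_spec th K a b ->
  K = (a+b)%nat /\ INR a < (INR b + 1)*th /\ INR b * th < INR a + 1.
Proof.
  intros Hth [[k [Hk [HK [Ha Hb]]]] | [k [Hk [HK [Ha Hb]]]]]; subst.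
  - split. lia.
    pose proof (flr_spec (INR k * th)) as H. rewrite <- Ha, <- INR_IZR_INZ in H. split; lra.
  - split. lia.
    pose proof (flr_spec (INR k / th)) as H. rewrite <- Hb, <- INR_IZR_INZ in H.
    assert (E : INR k / th * th = INR k) by (field; lra).
    destruct H as [H1 H2].
    assert (INR b * th <= INR k) by (rewrite <- E; apply Rmult_le_compat_r; lra).
    assert (INR k < (INR b + 1) * th) by (rewrite <- E; apply Rmult_lt_compat_r; lra).
    split; lra.
Qed.

Lemma step th a b a' b' : 0 < th ->
  (a' + b' = S (a + b))%nat ->
  INR a < (INR b + 1)*th -> INR b * th < INR a + 1 ->
  INR a' < (INR b' + 1)*th -> INR b' * th < INR a' + 1 ->
  (a' = S a /\ b' = b) \/ (a' = a /\ b' = S b).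
Proof.
  intros Hth Hs H1 H2 H3 H4.
  destruct (le_lt_dec (a+2) a') as [Ha|Ha].
  { exfalso. assert (INR (a+2) <= INR a') by (apply le_INR; lia).
    assert (INR (b'+1) <= INR b) by (apply le_INR; lia).
    rewrite plus_INR in *. simpl in *.
    assert ((INR b'+1)*th <= INR b * th) by (apply Rmult_le_compat_r; lra). lra. }
  destruct (le_lt_dec (b+2) b') as [Hb|Hb].
  { exfalso. assert (INR (b+2) <= INR b') by (apply le_INR; lia).
    assert (INR (a'+1) <= INR a) by (apply le_INR; lia).
    rewrite plus_INR in *. simpl in *.
    assert ((INR b+1+1)*th <= INR b' * th) by (apply Rmult_le_compat_r; lra). lra. }
  lia.
Qed.

Lemma rlist_max (l : list R) (Q : R -> Prop) : (exists x, In x l /\ Q x) ->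
  exists x0, In x0 l /\ Q x0 /\ forall x, In x l -> Q x -> x <= x0.
Proof.
  induction l as [|y t IH]; intros [x [Hx HQ]]; [destruct Hx|].
  destruct (classic (exists x, In x t /\ Q x)) as [Ht|Ht].
  - destruct (IH Ht) as [x0 [H1 [H2 H3]]].
    destruct (classic (Q y /\ x0 < y)) as [Hy|Hy].
    + exists y. split; [left; auto|split; [tauto|]].
      intros z [<-|Hz] Qz; [lra|]. specialize (H3 z Hz Qz). lra.
    + exists x0. split; [right; auto|split; [auto|]].
      intros z [<-|Hz] Qz; [|auto]. apply Rnot_lt_le. tauto.
  - destruct Hx as [<-|Hx]; [|exfalso; eauto].
    exists y. split; [left; auto|split; [auto|]].
    intros z [<-|Hz] Qz; [lra|exfalso; eauto].
Qed.

Lemma diffs_app2 u z y : diffs (u ++ [z; y]) = diffs (u ++ [z]) ++ [y - z].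
Proof.
  induction u as [|w u IH]; [reflexivity|].
  destruct u as [|v u]; [reflexivity|].
  simpl in *. rewrite IH. reflexivity.
Qed.

Lemma diffs_refl c l : diffs (map (fun x => c - x) (rev l)) = rev (diffs l).
Proof.
  induction l as [|x t IH]; [reflexivity|].
  destruct t as [|y t]; [reflexivity|].
  change (rev (x :: y :: t)) with ((rev t ++ [y]) ++ [x]).
  rewrite <- app_assoc, map_app. simpl map.
  rewrite diffs_app2.
  replace (map (fun x0 : R => c - x0) (rev t) ++ [c - y]) with (map (fun x0 : R => c - x0) (rev (y::t)))
    by (simpl; rewrite map_app; reflexivity).
  rewrite IH.
  change (diffs (x :: y :: t)) with ((y - x) :: diffs (y :: t)). simpl rev.
  do 2 f_equal. ring.
Qed.

Lemma ss_app (l : list R) y : StronglySorted Rlt l -> (forall z, In z l -> z < y) ->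
  StronglySorted Rlt (l ++ [y]).
Proof.
  induction l as [|x t IH]; intros H Hz; simpl.
  - constructor; constructor.
  - inversion H; subst. constructor.
    + apply IH; auto. intros; apply Hz; right; auto.
    + apply Forall_app. split; auto. constructor; [apply Hz; left; auto|constructor].
Qed.

Lemma ss_refl c (l : list R) : StronglySorted Rlt l ->
  StronglySorted Rlt (map (fun x => c - x) (rev l)).
Proof.
  induction l as [|x t IH]; intros H; simpl; [constructor|].
  inversion H; subst. rewrite map_app. simpl. apply ss_app; auto.
  intros z Hz. apply in_map_iff in Hz. destruct Hz as [w [<- Hw]].
  apply in_rev in Hw. rewrite Forall_forall in H3. specialize (H3 w Hw). lra.
Qed.

Lemma ss_eq (l1 l2 : list R) : StronglySorted Rlt l1 -> StronglySorted Rlt l2 ->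
  (forall x, In x l1 <-> In x l2) -> l1 = l2.
Proof.
  revert l2. induction l1 as [|x t IH]; intros l2 H1 H2 E.
  - destruct l2 as [|y u]; auto. exfalso. apply (proj2 (E y)). left; auto.
  - destruct l2 as [|y u]. { exfalso. apply (proj1 (E x)). left; auto. }
    inversion H1; subst. inversion H2; subst.
    rewrite Forall_forall in *.
    assert (x = y).
    { destruct (proj1 (E x) (or_introl eq_refl)) as [|Hx]; auto.
      destruct (proj2 (E y) (or_introl eq_refl)) as [|Hy]; auto.
      specialize (H6 _ Hx). specialize (H4 _ Hy). lra. }
    subst. f_equal. apply IH; auto.
    intros z; split; intros Hz.
    + destruct (proj1 (E z) (or_intror Hz)) as [<-|]; auto. specialize (H4 _ Hz). lra.
    + destruct (proj2 (E z) (or_intror Hz)) as [<-|]; auto. specialize (H6 _ Hz). lra.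
Qed.
Theorem lemma10 (theta : R) (K a b a' b' : nat) :
  irrational theta -> 1 < theta < 2 ->
  (1 <= K)%nat ->
  AB_spec theta K a b ->
  AB_spec theta (S K) a' b' ->
  (forall s, Tpset theta a b a' b' s -> inS theta s) /\
  (exists m M, Cset theta a b a' b' m /\ Cset theta a b a' b' M /\
     forall s, Cset theta a b a' b' s <-> (inS theta s /\ m <= s <= M)) /\
  (forall s, Cset theta a b a' b' s -> Cset theta a b a' b' (refl theta a b s)) /\
  (forall l : list R, Sorted Rlt l ->
     (forall s, In s l <-> Cset theta a b a' b' s) ->
     rev (diffs l) = diffs l).
Proof.
  intros _ Hth _ HA HA'.
  destruct (valid theta K a b ltac:(lra) HA) as [EK [V1 V2]].
  destruct (valid theta (S K) a' b' ltac:(lra) HA') as [EK' [V3 V4]].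
  assert (Hst := step theta a b a' b' ltac:(lra) ltac:(lia) V1 V2 V3 V4).
  unfold Cset, Tpset, Tset, Nset. unfold Defs.refl. unfold Defs.maxN.
  set (c := INR a + INR b * theta).
  set (m := Rmin (INR a) (INR b * theta)).
  set (M := Rmax (INR a) (INR b * theta)).
  set (M' := Rmax (INR a') (INR b' * theta)).
  assert (Hsum : m + M = c) by (unfold m, M, c, Rmin, Rmax; destruct Rle_dec; lra).
  assert (HmM : m <= M) by (unfold m, M, Rmin, Rmax; destruct Rle_dec; lra).
  assert (HM : exists i j, (i <= a)%nat /\ (j <= b)%nat /\ M = INR i + INR j * theta).
  { unfold M, Rmax; destruct Rle_dec; [exists 0%nat, b | exists a, 0%nat]; simpl;
    repeat split; try lia; ring. }
  assert (HM' : M < M' /\ M' <= INR a + 1 /\ M' <= (INR b + 1) * theta).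
  { unfold M, M', Rmax.
    destruct Hst as [[-> ->]|[-> ->]]; rewrite ?S_INR in *;
    repeat destruct Rle_dec; lra. }
  assert (Hc : c = INR a + INR b * theta) by reflexivity.
  clearbody c m M M'. destruct HM' as [HMM' [HB1 HB2]].
  assert (Hbd : forall s, inS theta s -> s < M' ->
    exists i j, (i <= a)%nat /\ (j <= b)%nat /\ s = INR i + INR j * theta).
  { intros s [i [j Es]] Hs. exists i, j.
    assert (0 <= INR i) by apply pos_INR. assert (0 <= INR j) by apply pos_INR.
    assert (0 <= INR j * theta) by (apply Rmult_le_pos; lra).
    split; [|split; auto].
    - destruct (le_lt_dec i a); auto. exfalso.
      assert (INR (S a) <= INR i) by (apply le_INR; lia). rewrite S_INR in *. lra.
    - destruct (le_lt_dec j b); auto. exfalso.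
      assert (INR (S b) <= INR j) by (apply le_INR; lia). rewrite S_INR in *.
      assert ((INR b + 1) * theta <= INR j * theta) by (apply Rmult_le_compat_r; lra). lra. }
  assert (Hrs : forall s, inS theta s -> s < M' -> inS theta (c - s)).
  { intros s Hs Hs'. destruct (Hbd s Hs Hs') as [i [j [Hi [Hj ->]]]].
    exists (a - i)%nat, (b - j)%nat. rewrite !minus_INR by lia. rewrite Hc. ring. }
  set (L := c - M').
  assert (HC : forall s, ((exists t, (inS theta t /\ M <= t < M') /\ s = c - t) \/
     (inS theta s /\ m <= s <= M) \/ (inS theta s /\ M <= s < M')) <->
     (inS theta s /\ L < s < M')).
  { intros s; split.
    - intros [[t [[Ht1 Ht2] ->]]|[[H1 H2]|[H1 H2]]].
      + split; [apply Hrs; tauto|]. unfold L; lra.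
      + split; auto. unfold L; lra.
      + split; auto. unfold L; lra.
    - intros [H1 H2].
      destruct (Rle_dec M s); [right; right; split; auto; lra|].
      destruct (Rle_dec m s); [right; left; split; auto; lra|].
      left. exists (c - s). split; [|ring]. split; [apply Hrs; auto; lra|]. unfold L in *; lra. }
  set (lst := flat_map (fun i => map (fun j => INR i + INR j * theta) (seq 0 (S b))) (seq 0 (S a))).
  assert (Hin : forall i j, (i <= a)%nat -> (j <= b)%nat -> In (INR i + INR j * theta) lst).
  { intros i j Hi Hj. unfold lst. apply in_flat_map. exists i. split.
    - apply in_seq. lia.
    - apply in_map_iff. exists j. split; auto. apply in_seq. lia. }
  assert (Hin2 : forall x, In x lst -> inS theta x).
  { intros x Hx. unfold lst in Hx. apply in_flat_map in Hx. destruct Hx as [i [_ Hx]].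
    apply in_map_iff in Hx. destruct Hx as [j [<- _]]. exists i, j. reflexivity. }
  destruct (rlist_max lst (fun x => x < M')) as [M0 [HM0a [HM0b HM0c]]].
  { destruct HM as [i [j [Hi [Hj E]]]]. exists M. split; auto. rewrite E; auto. }
  assert (HM0 : forall s, inS theta s -> s < M' -> s <= M0).
  { intros s Hs Hs'. destruct (Hbd s Hs Hs') as [i [j [Hi [Hj ->]]]].
    apply HM0c; auto. }
  assert (HMM0 : M <= M0).
  { destruct HM as [i [j [Hi [Hj E]]]]. apply HM0; auto. exists i, j; auto. }
  assert (HS0 : inS theta M0) by auto.
  assert (HC2 : forall s, (inS theta s /\ L < s < M') <-> (inS theta s /\ c - M0 <= s <= M0)).
  { intros s; split.
    - intros [H1 H2]. split; auto. split; [|apply HM0; tauto].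
      assert (c - s <= M0) by (apply HM0; [apply Hrs; auto; lra| unfold L in *; lra]). lra.
    - intros [H1 H2]. split; auto. unfold L; lra. }
  split; [|split; [|split]].
  - intros s [t [[Ht1 Ht2] ->]]. apply Hrs; tauto.
  - exists (c - M0), M0. rewrite !HC, !HC2.
    split; [split; [apply Hrs; auto|lra]|].
    split; [split; auto; lra|].
    intros s. rewrite HC, HC2. tauto.
  - intros s Hs. rewrite HC, HC2 in *. destruct Hs as [H1 H2].
    split; [apply Hrs; auto; lra|lra].
  - intros l Hl Hmem.
    assert (Hl' := Sorted_StronglySorted Rlt_trans Hl).
    assert (E : map (fun x => c - x) (rev l) = l).
    { apply ss_eq; auto. apply ss_refl; auto.
      intros x; split; intros Hx.
      - apply in_map_iff in Hx. destruct Hx as [y [<- Hy]]. apply in_rev in Hy.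
        apply Hmem in Hy. apply Hmem. rewrite HC, HC2 in *. destruct Hy.
        split; [apply Hrs; auto; lra|lra].
      - apply in_map_iff. exists (c - x). split; [ring|]. rewrite <- in_rev.
        apply Hmem in Hx. apply Hmem. rewrite HC, HC2 in *. destruct Hx.
        split; [apply Hrs; auto; lra|lra]. }
    rewrite <- E at 2. rewrite diffs_refl. reflexivity.
Qed.
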